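(* For any $n\in\mathbb{N}$ the standing up map $T^n:\mathcal{B}_n\to\Omega$ is a bijection.
   Context: Let $\mathcal{B}$ be the set of $\sigma\in\{-1,+1\}^{\mathbb{Z}}$ for which there exist $a,b\in\mathbb{Z}$ with $\sigma_{a-i}=-1$ and $\sigma_{b+i}=+1$ for all $i\in\mathbb{N}$. For $\sigma\in\mathcal{B}$ let $N(\sigma)=\#\{i\geq1:\sigma_i=-1\}-\#\{i\leq 0:\sigma_i=+1\}$, and $\mathcal{B}_n=\{\sigma\in\mathcal{B}:N(\sigma)=n\}$. Let $\Omega=\{\omega\in\mathbb{Z}_{\geq 0}^{\mathbb{Z}_{<0}} : \exists N>0 \text{ such that } \omega_{-i}=0\ \forall i\geq N\}$. For $\sigma\in\mathcal{B}_n$ let $S_r(\sigma)$ be the site of the $r$-th positive spin of $\sigma$ counted from the left. The standing up map is $T^n(\sigma)=\omega$ with $\omega_{-r}=S_{r+1}(\sigma)-S_r(\sigma)-1$ for $r\in\mathbb{Z}_{>0}$, i.e. $\omega_{-r}$ is the number of negative spins between the $r$-th and $(r+1)$-th positive spins. *)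

(* Defs.v *)
(* Spin configurations sigma : Z -> bool, with true = +1, false = -1. *)
From Stdlib Require Import ZArith Ensembles Finite_sets ClassicalEpsilon.
Open Scope Z_scope.

Definition config := Z -> bool.

Definition inB (s : config) : Prop :=
  exists a b : Z, (forall i : nat, s (a - Z.of_nat i) = false) /\
                  (forall i : nat, s (b + Z.of_nat i) = true).

Definition negs_right (s : config) : Ensemble Z := fun i => 1 <= i /\ s i = false.
Definition pos_left (s : config) : Ensemble Z := fun i => i <= 0 /\ s i = true.

Definition N_is (s : config) (n : Z) : Prop :=
  exists k m : nat, cardinal Z (negs_right s) k /\ cardinal Z (pos_left s) m /\
                    Z.of_nat k - Z.of_nat m = n.

Definition inBn (n : Z) (s : config) : Prop := inB s /\ N_is s n.

(* Omega: omega indexed by Z_{<0}, nonnegative integer valued, eventually zero.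
   Represented as Z -> nat, normalised to 0 on the irrelevant indices i >= 0. *)
Definition inOmega (w : Z -> nat) : Prop :=
  (forall i, 0 <= i -> w i = 0%nat) /\
  exists N : Z, N > 0 /\ forall i, i >= N -> w (- i) = 0%nat.

Definition is_S (s : config) (r : nat) (x : Z) : Prop :=
  s x = true /\ cardinal Z (fun i => i <= x /\ s i = true) r.

Definition S (s : config) (r : nat) : Z :=
  epsilon (inhabits 0) (is_S s r).

Definition S_spec (s : config) (r : nat) :
  (exists x, is_S s r x) -> is_S s r (S s r).
Proof. intro H. unfold S. apply epsilon_spec, H. Qed.

(* Standing up map T^n (its formula does not depend on n):
   omega_{-r} = S_{r+1}(s) - S_r(s) - 1 for r >= 1. *)
Definition T (n : Z) (s : config) : Z -> nat :=
  fun i => if i <? 0 then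
             let r := Z.to_nat (- i) in Z.to_nat (S s (r + 1) - S s r - 1)
           else 0%nat.

(* Main.v *)
Require Import Defs.
From Stdlib Require Import ZArith Ensembles Finite_sets Finite_sets_facts Lia Bool List
  FunctionalExtensionality PropExtensionality.
Open Scope Z_scope.

Lemma ens_eq (A B : Ensemble Z) : (forall x, A x <-> B x) -> A = B.
Proof. intro H; apply functional_extensionality; intro x; apply propositional_extensionality; auto. Qed.

Fixpoint cntn (f : Z -> bool) (lo : Z) (k : nat) : nat :=
  match k with
  | O => O
  | Datatypes.S k' => Nat.add (cntn f lo k') (if f (Z.add lo (Z.of_nat (Datatypes.S k'))) then 1%nat else 0%nat)
  end.

Lemma cntn_S f lo k : cntn f lo (Datatypes.S k) =
  Nat.add (cntn f lo k) (if f (lo + Z.of_nat (Datatypes.S k)) then 1%nat else 0%nat).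
Proof. reflexivity. Qed.

Lemma card_win f lo k :
  cardinal Z (fun i => lo < i <= lo + Z.of_nat k /\ f i = true) (cntn f lo k).
Proof.
  induction k as [|k IH].
  - simpl. replace (fun i => lo < i <= lo + 0 /\ f i = true) with (Empty_set Z).
    + constructor.
    + apply ens_eq; intro x; split; [intro H; destruct H | intros [H _]; lia].
  - rewrite cntn_S. destruct (f (lo + Z.of_nat (Datatypes.S k))) eqn:E.
    + rewrite Nat.add_1_r.
      replace (fun i => lo < i <= lo + Z.of_nat (Datatypes.S k) /\ f i = true)
        with (Ensembles.Add Z (fun i => lo < i <= lo + Z.of_nat k /\ f i = true) (lo + Z.of_nat (Datatypes.S k))).
      * apply card_add; auto. unfold In; intros [HH _]; lia.
      * apply ens_eq; intro x; split.
        -- intro H; destruct H as [x [H1 H2]|x H]; [split; auto; lia|].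
           destruct H; split; auto; lia.
        -- intros [H1 H2].
           destruct (Z.eq_dec x (lo + Z.of_nat (Datatypes.S k))) as [->|ne].
           ++ right; constructor.
           ++ left; unfold In; split; auto; lia.
    + rewrite Nat.add_0_r.
      replace (fun i => lo < i <= lo + Z.of_nat (Datatypes.S k) /\ f i = true)
        with (fun i => lo < i <= lo + Z.of_nat k /\ f i = true); auto.
      apply ens_eq; intro x; split.
      * intros [H1 H2]; split; auto; lia.
      * intros [H1 H2]. destruct (Z.eq_dec x (lo + Z.of_nat (Datatypes.S k))) as [->|ne].
        -- congruence.
        -- split; auto; lia.
Qed.

Lemma cntn_split f lo k m :
  cntn f lo (k + m) = (cntn f lo k + cntn f (lo + Z.of_nat k) m)%nat.
Proof.
  induction m as [|m IH].
  - rewrite Nat.add_0_r; simpl; lia.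
  - rewrite Nat.add_succ_r, !cntn_S, IH.
    replace (lo + Z.of_nat (Datatypes.S (k + m))) with (lo + Z.of_nat k + Z.of_nat (Datatypes.S m)) by lia.
    lia.
Qed.

Lemma cntn_neg f lo k : (cntn f lo k + cntn (fun i => negb (f i)) lo k)%nat = k.
Proof.
  induction k as [|k IH]; [reflexivity|].
  rewrite !cntn_S. destruct (f (lo + Z.of_nat (Datatypes.S k))); simpl; lia.
Qed.

Definition cnt (s : config) (a x : Z) : nat := cntn s a (Z.to_nat (x - a)).

Lemma Z_ind_from (x : Z) (P : Z -> Prop) :
  P x -> (forall y, x <= y -> P y -> P (y + 1)) -> forall y, x <= y -> P y.
Proof.
  intros H0 HS y Hy.
  replace y with (x + Z.of_nat (Z.to_nat (y - x))) by lia.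
  induction (Z.to_nat (y - x)) as [|k IH].
  - rewrite Z.add_0_r; auto.
  - replace (x + Z.of_nat (Datatypes.S k)) with (x + Z.of_nat k + 1) by lia.
    apply HS; auto; lia.
Qed.

Lemma cnt_a s a : cnt s a a = O.
Proof. unfold cnt. rewrite Z.sub_diag. reflexivity. Qed.

Lemma cnt_step s a x : a < x -> cnt s a x = Nat.add (cnt s a (x - 1)) (if s x then 1%nat else 0%nat).
Proof.
  intro H. unfold cnt.
  replace (Z.to_nat (x - a)) with (Datatypes.S (Z.to_nat (x - 1 - a))) by lia.
  rewrite cntn_S. replace (a + Z.of_nat (Datatypes.S (Z.to_nat (x - 1 - a)))) with x by lia.
  reflexivity.
Qed.

Lemma cnt_step' s a y : a <= y -> cnt s a (y + 1) = Nat.add (cnt s a y) (if s (y + 1) then 1%nat else 0%nat).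
Proof. intro H. rewrite cnt_step by lia. f_equal. f_equal. lia. Qed.

Lemma cnt_mono s a x y : a <= x -> x <= y -> (cnt s a x <= cnt s a y)%nat.
Proof.
  intros Hx. revert y. apply Z_ind_from; auto.
  intros y Hy IH. rewrite cnt_step' by lia. lia.
Qed.

Lemma cnt_strict s a x y : a <= x -> x < y -> s y = true -> (cnt s a x + 1 <= cnt s a y)%nat.
Proof.
  intros Hx Hxy Hs. rewrite (cnt_step s a y) by lia. rewrite Hs.
  pose proof (cnt_mono s a x (y - 1)). lia.
Qed.

Lemma cnt_card s a x : (forall y, y <= a -> s y = false) ->
  cardinal Z (fun i => i <= x /\ s i = true) (cnt s a x).
Proof.
  intros Ha. destruct (Z_le_gt_dec a x) as [H|H].
  - unfold cnt.
    replace (fun i => i <= x /\ s i = true)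
      with (fun i => a < i <= a + Z.of_nat (Z.to_nat (x - a)) /\ s i = true).
    + apply card_win.
    + apply ens_eq; intro i; split; intros [H1 H2]; split; auto; try lia.
      split; try lia. destruct (Z_le_gt_dec i a); [rewrite Ha in H2; auto; discriminate | lia].
  - unfold cnt. replace (Z.to_nat (x - a)) with O by lia. simpl.
    replace (fun i => i <= x /\ s i = true) with (Empty_set Z). constructor.
    apply ens_eq; intro i; split; [intro F; destruct F|].
    intros [H1 H2]. rewrite Ha in H2 by lia. discriminate.
Qed.

Lemma is_S_iff s a r x : (forall y, y <= a -> s y = false) ->
  is_S s r x <-> s x = true /\ cnt s a x = r.
Proof.
  intros Ha. unfold is_S; split; intros [H1 H2]; split; auto.
  - eapply cardinal_unicity; [apply cnt_card; auto | auto].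
  - subst. apply cnt_card; auto.
Qed.

Lemma inB_norm s : inB s -> exists a b, a <= 0 /\ 1 <= b /\
  (forall y, y <= a -> s y = false) /\ (forall y, b <= y -> s y = true).
Proof.
  intros [a [b [Ha Hb]]]. exists (Z.min a 0), (Z.max b 1). repeat split; try lia.
  - intros y Hy. replace y with (a - Z.of_nat (Z.to_nat (a - y))) by lia. apply Ha.
  - intros y Hy. replace y with (b + Z.of_nat (Z.to_nat (y - b))) by lia. apply Hb.
Qed.

Lemma is_S_unique s a r x y : (forall y, y <= a -> s y = false) ->
  is_S s r x -> is_S s r y -> x = y.
Proof.
  intros Ha H1 H2. rewrite (is_S_iff s a) in H1, H2 by auto.
  destruct H1 as [H1 E1], H2 as [H2 E2].
  assert (a < x) by (destruct (Z_le_gt_dec x a); [rewrite Ha in H1 by auto; discriminate|lia]).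
  assert (a < y) by (destruct (Z_le_gt_dec y a); [rewrite Ha in H2 by auto; discriminate|lia]).
  destruct (Z.lt_total x y) as [L|[L|L]]; auto.
  - pose proof (cnt_strict s a x y ltac:(lia) L H2). lia.
  - pose proof (cnt_strict s a y x ltac:(lia) L H1). lia.
Qed.

Lemma S_eq s a r x : (forall y, y <= a -> s y = false) -> is_S s r x -> S s r = x.
Proof.
  intros Ha H. eapply is_S_unique; eauto. apply S_spec. eauto.
Qed.

Lemma cnt_above s a b : (forall y, b <= y -> s y = true) -> a <= b ->
  forall x, b <= x -> Z.of_nat (cnt s a x) = Z.of_nat (cnt s a b) + (x - b).
Proof.
  intros Hb Hab. apply Z_ind_from; [lia|].
  intros y Hy IH. rewrite cnt_step' by lia. rewrite Hb by lia. lia.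
Qed.

Lemma ivt s a : (forall y, y <= a -> s y = false) ->
  forall y, a <= y -> forall r, (1 <= r <= cnt s a y)%nat ->
  exists x, s x = true /\ cnt s a x = r.
Proof.
  intros Ha. apply (Z_ind_from a (fun y => forall r, (1 <= r <= cnt s a y)%nat ->
    exists x, s x = true /\ cnt s a x = r)).
  - intros r. rewrite cnt_a. lia.
  - intros y Hy IH r Hr. rewrite cnt_step' in Hr by lia.
    destruct (Nat.le_gt_cases r (cnt s a y)) as [L|L].
    + apply IH; lia.
    + exists (y + 1). destruct (s (y + 1)) eqn:E; [|lia].
      split; auto. rewrite cnt_step' by lia. rewrite E. lia.
Qed.


Lemma S_spec' s a b r : (forall y, y <= a -> s y = false) -> (forall y, b <= y -> s y = true) ->
  a <= b -> (1 <= r)%nat -> s (S s r) = true /\ cnt s a (S s r) = r.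
Proof.
  intros Ha Hb Hab Hr. rewrite <- (is_S_iff s a) by auto. apply S_spec.
  destruct (ivt s a Ha (b + Z.of_nat r) ltac:(lia) r) as [x [H1 H2]].
  - pose proof (cnt_above s a b Hb Hab (b + Z.of_nat r) ltac:(lia)). lia.
  - exists x. rewrite (is_S_iff s a); auto.
Qed.

Lemma S_lt s a b r : (forall y, y <= a -> s y = false) -> (forall y, b <= y -> s y = true) ->
  a <= b -> (1 <= r)%nat -> S s r < S s (r + 1).
Proof.
  intros Ha Hb Hab Hr.
  destruct (S_spec' s a b r Ha Hb Hab Hr) as [A1 A2].
  destruct (S_spec' s a b (r + 1) Ha Hb Hab ltac:(lia)) as [B1 B2].
  assert (a < S s r) by (destruct (Z_le_gt_dec (S s r) a); [rewrite Ha in A1 by auto; discriminate|lia]).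
  destruct (Z_lt_le_dec (S s r) (S s (r + 1))) as [L|L]; auto.
  pose proof (cnt_mono s a (S s (r + 1)) (S s r)).
  assert (a < S s (r+1)) by (destruct (Z_le_gt_dec (S s (r+1)) a); [rewrite Ha in B1 by auto; discriminate|lia]).
  lia.
Qed.

Lemma T_formula n s a b r : (forall y, y <= a -> s y = false) -> (forall y, b <= y -> s y = true) ->
  a <= b -> (1 <= r)%nat ->
  S s (r + 1) = S s r + Z.of_nat (T n s (- Z.of_nat r)) + 1.
Proof.
  intros Ha Hb Hab Hr. pose proof (S_lt s a b r Ha Hb Hab Hr).
  unfold T. replace (- Z.of_nat r <? 0) with true by (symmetry; apply Z.ltb_lt; lia).
  replace (Z.to_nat (- - Z.of_nat r)) with r by lia. lia.
Qed.

Lemma true_is_S s a b x : (forall y, y <= a -> s y = false) -> (forall y, b <= y -> s y = true) ->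
  a <= b -> s x = true -> exists r, (1 <= r)%nat /\ S s r = x.
Proof.
  intros Ha Hb Hab Hx.
  assert (a < x) by (destruct (Z_le_gt_dec x a); [rewrite Ha in Hx by auto; discriminate|lia]).
  exists (cnt s a x). split.
  - rewrite cnt_step by lia. rewrite Hx. lia.
  - apply (S_eq s a); auto. rewrite (is_S_iff s a); auto.
Qed.

Lemma N_card s a b : (forall y, y <= a -> s y = false) -> (forall y, b <= y -> s y = true) ->
  a <= 0 -> 1 <= b ->
  exists k m, cardinal Z (negs_right s) k /\ cardinal Z (pos_left s) m /\
    Z.of_nat k - Z.of_nat m = b - 1 - Z.of_nat (cnt s a (b - 1)).
Proof.
  intros Ha Hb Ha0 Hb1.
  exists (cntn (fun i => negb (s i)) 0 (Z.to_nat (b - 1))), (cntn s a (Z.to_nat (- a))).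
  split; [|split].
  - replace (negs_right s) with (fun i => 0 < i <= 0 + Z.of_nat (Z.to_nat (b - 1)) /\ negb (s i) = true).
    + apply card_win.
    + apply ens_eq; intro i; unfold negs_right; split.
      * intros [H1 H2]; split; [lia|]. destruct (s i); auto; discriminate.
      * intros [H1 H2]. assert (i < b \/ b <= i) as [L|L] by lia.
        -- split; [lia|]. destruct (s i); auto; discriminate.
        -- rewrite Hb in H2 by auto. discriminate.
  - replace (pos_left s) with (fun i => a < i <= a + Z.of_nat (Z.to_nat (- a)) /\ s i = true).
    + apply card_win.
    + apply ens_eq; intro i; unfold pos_left; split.
      * intros [H1 H2]; split; [lia|auto].
      * intros [H1 H2]. split; auto. split; [|lia].
        destruct (Z_le_gt_dec i a); [rewrite Ha in H2 by auto; discriminate|lia].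
  - unfold cnt. replace (Z.to_nat (b - 1 - a)) with (Z.to_nat (- a) + Z.to_nat (b - 1))%nat by lia.
    rewrite cntn_split. replace (a + Z.of_nat (Z.to_nat (- a))) with 0 by lia.
    pose proof (cntn_neg s 0 (Z.to_nat (b - 1))). lia.
Qed.

Lemma N_formula s a b n : (forall y, y <= a -> s y = false) -> (forall y, b <= y -> s y = true) ->
  a <= 0 -> 1 <= b -> N_is s n -> n = b - 1 - Z.of_nat (cnt s a (b - 1)).
Proof.
  intros Ha Hb Ha0 Hb1 [k [m [Hk [Hm E]]]].
  destruct (N_card s a b Ha Hb Ha0 Hb1) as [k' [m' [Hk' [Hm' E']]]].
  rewrite (cardinal_unicity _ _ _ Hk _ Hk'), (cardinal_unicity _ _ _ Hm _ Hm') in E. lia.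
Qed.

Lemma cnt_flat s a x : a <= x -> forall y, x <= y -> (forall z, x < z <= y -> s z = false) ->
  cnt s a y = cnt s a x.
Proof.
  intros Hx. apply (Z_ind_from x (fun y => (forall z, x < z <= y -> s z = false) -> cnt s a y = cnt s a x)).
  - auto.
  - intros y Hy IH Hz. rewrite cnt_step' by lia. rewrite Hz by lia. rewrite IH; [lia|].
    intros; apply Hz; lia.
Qed.

Lemma S_above s a b r : (forall y, y <= a -> s y = false) -> (forall y, b <= y -> s y = true) ->
  a <= b -> (cnt s a b <= r)%nat -> S s r = b + Z.of_nat r - Z.of_nat (cnt s a b).
Proof.
  intros Ha Hb Hab Hr. apply (S_eq s a); auto. rewrite (is_S_iff s a) by auto. split.
  - apply Hb; lia.
  - pose proof (cnt_above s a b Hb Hab (b + Z.of_nat r - Z.of_nat (cnt s a b)) ltac:(lia)). lia.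
Qed.

Lemma part1 n s : inBn (Z.of_nat n) s -> inOmega (T (Z.of_nat n) s).
Proof.
  intros [HB _]. destruct (inB_norm s HB) as [a [b [Ha0 [Hb1 [Ha Hb]]]]].
  split.
  - intros i Hi. unfold T. replace (i <? 0) with false by (symmetry; apply Z.ltb_ge; lia). auto.
  - exists (Z.of_nat (cnt s a b) + 1). split; [lia|]. intros i Hi.
    unfold T. replace (- i <? 0) with true by (symmetry; apply Z.ltb_lt; lia).
    cbv zeta.
    rewrite (S_above s a b (Z.to_nat (- - i) + 1)) by (auto; lia).
    rewrite (S_above s a b (Z.to_nat (- - i))) by (auto; lia). lia.
Qed.

Lemma part2 n s1 s2 : inBn (Z.of_nat n) s1 -> inBn (Z.of_nat n) s2 ->
  T (Z.of_nat n) s1 = T (Z.of_nat n) s2 -> s1 = s2.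
Proof.
  intros [HB1 HN1] [HB2 HN2] HT.
  destruct (inB_norm s1 HB1) as [a1 [b1 [Ha01 [Hb11 [Ha1 Hb1']]]]].
  destruct (inB_norm s2 HB2) as [a2 [b2 [Ha02 [Hb12 [Ha2 Hb2']]]]].
  set (b := Z.max b1 b2).
  assert (Hb1 : forall y, b <= y -> s1 y = true) by (intros; apply Hb1'; lia).
  assert (Hb2 : forall y, b <= y -> s2 y = true) by (intros; apply Hb2'; lia).
  pose proof (N_formula s1 a1 b _ Ha1 Hb1 Ha01 ltac:(lia) HN1) as E1.
  pose proof (N_formula s2 a2 b _ Ha2 Hb2 Ha02 ltac:(lia) HN2) as E2.
  assert (C1 : cnt s1 a1 b = Nat.add (cnt s1 a1 (b - 1)) 1%nat)
    by (rewrite cnt_step by lia; rewrite Hb1 by lia; reflexivity).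
  assert (C2 : cnt s2 a2 b = Nat.add (cnt s2 a2 (b - 1)) 1%nat)
    by (rewrite cnt_step by lia; rewrite Hb2 by lia; reflexivity).
  assert (CK : cnt s1 a1 b = cnt s2 a2 b) by lia.
  assert (SK1 : S s1 (cnt s1 a1 b) = b).
  { apply (S_eq s1 a1); auto. rewrite (is_S_iff s1 a1) by auto. split; auto. apply Hb1; lia. }
  assert (SK2 : S s2 (cnt s1 a1 b) = b).
  { apply (S_eq s2 a2); auto. rewrite (is_S_iff s2 a2) by auto. split; auto. apply Hb2; lia. }
  assert (D : forall d, S s1 (1 + d) - S s1 1 = S s2 (1 + d) - S s2 1).
  { induction d as [|d IH]; [rewrite Nat.add_0_r; lia|].
    replace (1 + Datatypes.S d)%nat with ((1 + d) + 1)%nat by lia.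
    rewrite (T_formula (Z.of_nat n) s1 a1 b) by (auto; lia).
    rewrite (T_formula (Z.of_nat n) s2 a2 b) by (auto; lia).
    rewrite HT. lia. }
  assert (E0 : S s1 1 = S s2 1).
  { pose proof (D (cnt s1 a1 b - 1)%nat) as D'.
    replace (1 + (cnt s1 a1 b - 1))%nat with (cnt s1 a1 b) in D' by lia. lia. }
  assert (EA : forall r, (1 <= r)%nat -> S s1 r = S s2 r).
  { intros r Hr. pose proof (D (r - 1)%nat) as D'.
    replace (1 + (r - 1))%nat with r in D' by lia. lia. }
  apply functional_extensionality; intro x.
  destruct (s1 x) eqn:X1, (s2 x) eqn:X2; auto.
  - destruct (true_is_S s1 a1 b x Ha1 Hb1 ltac:(lia) X1) as [r [Hr Er]].
    destruct (S_spec' s2 a2 b r Ha2 Hb2 ltac:(lia) Hr) as [T2 _].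
    rewrite <- EA, Er in T2 by auto. congruence.
  - destruct (true_is_S s2 a2 b x Ha2 Hb2 ltac:(lia) X2) as [r [Hr Er]].
    destruct (S_spec' s1 a1 b r Ha1 Hb1 ltac:(lia) Hr) as [T1 _].
    rewrite EA, Er in T1 by auto. congruence.
Qed.

Fixpoint Wsum (w : Z -> nat) (k : nat) : Z :=
  match k with
  | O => 0
  | Datatypes.S j => Wsum w j + Z.of_nat (w (- (Z.of_nat j + 1)))
  end.

Fixpoint Qf (w : Z -> nat) (c : Z) (k : nat) : Z :=
  match k with
  | O => c
  | Datatypes.S j => Qf w c j + Z.of_nat (w (- (Z.of_nat j + 1))) + 1
  end.

Lemma Qf_formula w c j : Qf w c j = c + Z.of_nat j + Wsum w j.
Proof. induction j as [|j IH]; simpl Qf; simpl Wsum; lia. Qed.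

Lemma Wsum_nonneg w j : 0 <= Wsum w j.
Proof. induction j; simpl; lia. Qed.

Lemma Qf_mono w c i j : (i <= j)%nat -> Qf w c i + Z.of_nat (j - i) <= Qf w c j.
Proof.
  intros H. induction H.
  - rewrite Nat.sub_diag. lia.
  - simpl Qf. replace (Datatypes.S m - i)%nat with (Datatypes.S (m - i)) by lia. lia.
Qed.

Definition sdef (w : Z -> nat) (c : Z) (x : Z) : bool :=
  existsb (fun j => Z.eqb x (Qf w c j)) (seq 0 (Z.to_nat (x - c) + 1)).

Lemma sdef_spec w c x : sdef w c x = true <-> exists j, x = Qf w c j.
Proof.
  unfold sdef. rewrite existsb_exists. split.
  - intros [j [_ E]]. exists j. apply Z.eqb_eq; auto.
  - intros [j E]. exists j. split.
    + apply in_seq. pose proof (Qf_mono w c 0 j ltac:(lia)). simpl Qf in *. lia.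
    + apply Z.eqb_eq; auto.
Qed.

Lemma part3 n w : inOmega w -> exists s, inBn (Z.of_nat n) s /\ T (Z.of_nat n) s = w.
Proof.
  intros [Hw0 [Nw [HN Hw]]].
  set (K := Z.to_nat Nw).
  assert (WK : forall j, (K <= j)%nat -> Wsum w j = Wsum w K).
  { intros j Hj. induction j as [|j IH].
    - assert (K = O) by lia. rewrite H. reflexivity.
    - destruct (Nat.eq_dec K (Datatypes.S j)) as [e|ne]; [rewrite e; reflexivity|].
      simpl Wsum. rewrite Hw by lia. rewrite IH by lia. lia. }
  set (c := Z.of_nat n + 1 - Wsum w K).
  set (s := sdef w c).
  set (a := Z.min (c - 1) 0).
  assert (Ha : forall y, y <= a -> s y = false).
  { intros y Hy. destruct (s y) eqn:E; auto. apply sdef_spec in E. destruct E as [j E].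
    pose proof (Qf_mono w c 0 j ltac:(lia)). simpl Qf in *. lia. }
  assert (Hb : forall y, Qf w c K <= y -> s y = true).
  { intros y Hy. apply sdef_spec. exists (K + Z.to_nat (y - Qf w c K))%nat.
    rewrite Qf_formula in Hy. rewrite Qf_formula. rewrite WK by lia. rewrite (Qf_formula w c K). lia. }
  assert (HaQ : a <= Qf w c K) by (rewrite Qf_formula; pose proof (Wsum_nonneg w K); lia).
  assert (Scnt : forall j, cnt s a (Qf w c j) = Datatypes.S j).
  { induction j as [|j IH].
    - simpl Qf. rewrite cnt_step by lia.
      assert (s c = true) by (apply sdef_spec; exists O; reflexivity). rewrite H.
      rewrite (cnt_flat s a a ltac:(lia) (c - 1) ltac:(lia)).
      + rewrite cnt_a. reflexivity.
      + intros z Hz. destruct (s z) eqn:E; auto. apply sdef_spec in E. destruct E as [i E].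
        pose proof (Qf_mono w c 0 i ltac:(lia)). simpl Qf in *. lia.
    - pose proof (Qf_mono w c j (Datatypes.S j) ltac:(lia)).
      pose proof (Qf_mono w c 0 j ltac:(lia)). simpl Qf in H0.
      rewrite (cnt_step s a (Qf w c (Datatypes.S j))) by lia.
      assert (s (Qf w c (Datatypes.S j)) = true) by (apply sdef_spec; eauto). rewrite H1.
      rewrite (cnt_flat s a (Qf w c j) ltac:(lia) (Qf w c (Datatypes.S j) - 1)).
      + rewrite IH. lia.
      + simpl Qf. lia.
      + intros z Hz. destruct (s z) eqn:E; auto. apply sdef_spec in E. destruct E as [i E].
        destruct (Nat.le_gt_cases i j) as [L|L].
        * pose proof (Qf_mono w c i j L). lia.
        * pose proof (Qf_mono w c (Datatypes.S j) i L). lia. }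
  assert (SQ : forall j, S s (Datatypes.S j) = Qf w c j).
  { intros j. apply (S_eq s a); auto. rewrite (is_S_iff s a) by auto. split; auto.
    apply sdef_spec; eauto. }
  exists s. split; [split|].
  - exists a, (Qf w c K). split.
    + intros i. apply Ha. lia.
    + intros i. apply Hb. lia.
  - set (j0 := Nat.max K (Z.to_nat (1 - c))).
    assert (Hb' : forall y, Qf w c j0 <= y -> s y = true).
    { intros y Hy. apply Hb. pose proof (Qf_mono w c K j0 ltac:(lia)). lia. }
    assert (Q1 : 1 <= Qf w c j0) by (rewrite Qf_formula; pose proof (Wsum_nonneg w j0); lia).
    destruct (N_card s a (Qf w c j0) Ha Hb' ltac:(lia) Q1) as [k [m [Hk [Hm E]]]].
    exists k, m. split; [auto|split; [auto|]]. rewrite E.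
    pose proof (Scnt j0) as C.
    rewrite cnt_step in C by lia. rewrite (Hb' (Qf w c j0)) in C by lia.
    rewrite Qf_formula, WK by lia. rewrite Qf_formula, WK in C by lia. lia.
  - apply functional_extensionality; intro i. unfold T.
    destruct (i <? 0) eqn:E.
    + apply Z.ltb_lt in E. cbv zeta.
      replace (Z.to_nat (- i)) with (Datatypes.S (Z.to_nat (- i) - 1)) by lia.
      replace (Datatypes.S (Z.to_nat (- i) - 1) + 1)%nat with (Datatypes.S (Datatypes.S (Z.to_nat (- i) - 1))) by lia.
      rewrite !SQ. simpl Qf.
      replace (- (Z.of_nat (Z.to_nat (- i) - 1) + 1)) with i by lia. lia.
    + symmetry. apply Hw0. apply Z.ltb_ge; auto.
Qed.

Theorem lemma3p2 (n : nat) :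
  (forall s, inBn (Z.of_nat n) s -> inOmega (T (Z.of_nat n) s)) /\
  (forall s1 s2, inBn (Z.of_nat n) s1 -> inBn (Z.of_nat n) s2 ->
     T (Z.of_nat n) s1 = T (Z.of_nat n) s2 -> s1 = s2) /\
  (forall w, inOmega w -> exists s, inBn (Z.of_nat n) s /\ T (Z.of_nat n) s = w).
Proof.
  split; [|split].
  - apply part1.
  - apply part2.
  - apply part3.
Qed.
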